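(* Let $n\ge2$. There is no homeomorphism $\Phi:Q\to(\mathcal K_0^n,d_{AW})$ such that for all $x,y\in Q$, $x\preceq y$ if and only if $\Phi(x)\subseteq\Phi(y)$.
   Context: $Q=\prod_{i=1}^\infty[-1,1]$ with the product topology and the coordinatewise partial order: $x\preceq y$ iff $x_i\le y_i$ for all $i$. $\mathcal K_0^n$: closed convex subsets of $\mathbb R^n$ containing $0$, with the Attouch–Wets metric $d_{AW}(A,K)=\sup_{j\in\mathbb N}\min\{\frac1j,\sup_{\|x\|<j}|d(x,A)-d(x,K)|\}$, $d(x,A)=\inf_{a\in A}\|x-a\|$. *)

(* Defs.v *)
From HB Require Import structures.
From mathcomp Require Import all_boot all_order all_algebra.
From mathcomp Require Import all_classical all_reals all_analysis.
Set Implicit Arguments. Unset Strict Implicit. Unset Printing Implicit Defensive.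
Import Order.TTheory GRing.Theory Num.Theory.
Import numFieldNormedType.Exports.
Local Open Scope classical_set_scope.
Local Open Scope ring_scope.

Section Defs.
Variable R : realType.

(* The Hilbert cube Q = prod_{i} [-1,1], points indexed by nat. *)
Definition Qset : set (nat -> R) := [set x | forall i, -1 <= x i <= 1].

Definition Qle (x y : nat -> R) : Prop := forall i, x i <= y i.

(* Open subsets of Q for the product topology (basic neighbourhoods:
   finitely many coordinates within epsilon). *)
Definition Q_open (U : set (nat -> R)) : Prop :=
  U `<=` Qset /\
  forall x, U x -> exists (N : nat) (e : R), 0 < e /\
    forall y, Qset y -> (forall i, (i < N)%N -> `|y i - x i| < e) -> U y.

Variable n : nat.

Definition enorm (x : 'rV[R]_n) : R := Num.sqrt (\sum_(i < n) x ord0 i ^+ 2).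

Definition edist (x : 'rV[R]_n) (A : set 'rV[R]_n) : R :=
  inf [set enorm (x - a) | a in A].

Definition convex_set (A : set 'rV[R]_n) : Prop :=
  forall a b t, A a -> A b -> 0 <= t <= 1 -> A (t *: a + (1 - t) *: b).

Definition K0 : set (set 'rV[R]_n) :=
  [set A | closed A /\ convex_set A /\ A 0].

Definition dAW (A K : set 'rV[R]_n) : R :=
  sup [set Num.min (j%:R^-1)
          (sup [set `|edist x A - edist x K| | x in [set x | enorm x < j%:R]])
       | j in [set j : nat | (0 < j)%N]].

Definition K0_open (U : set (set 'rV[R]_n)) : Prop :=
  U `<=` K0 /\
  forall A, U A -> exists e : R, 0 < e /\
    forall B, K0 B -> dAW A B < e -> U B.

Definition homeo_Q_K0 (Phi : (nat -> R) -> set 'rV[R]_n) : Prop :=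
  [/\ (forall x, Qset x -> K0 (Phi x)),
      {in Qset &, injective Phi},
      (forall A, K0 A -> exists2 x, Qset x & Phi x = A),
      (forall V, K0_open V -> Q_open (Qset `&` Phi @^-1` V)) &
      (forall U, Q_open U -> K0_open (Phi @` U))].

End Defs.

(* Main.v *)
Require Import Defs.
From HB Require Import structures.
From mathcomp Require Import all_boot all_order all_algebra.
From mathcomp Require Import all_classical all_reals all_analysis.
From mathcomp Require Import ring lra.
Import Order.TTheory GRing.Theory Num.Theory.
Import numFieldNormedType.Exports.
Local Open Scope classical_set_scope.
Local Open Scope ring_scope.

Section H.
Variables (R : realType) (n : nat).

Lemma closed_coord (k : 'I_n) (P : set R) : closed P ->
  closed [set v : 'rV[R]_n | P (v ord0 k)].
Proof.
move=> cP; apply: (@preimage_closed _ _ (fun v : 'rV[R]_n => v ord0 k)) => //.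
move=> x _; exact: coord_continuous.
Qed.

Lemma closed_coord2 (k l : 'I_n) :
  closed [set v : 'rV[R]_n | v ord0 k - v ord0 l = 0].
Proof.
apply: (@preimage_closed _ _ (fun v : 'rV[R]_n => v ord0 k - v ord0 l) [set x | x = 0]); last exact: closed_eq.
move=> x _; exact: (cvgB (@coord_continuous R 1 n ord0 k x) (@coord_continuous R 1 n ord0 l x)).
Qed.

Variables (i0 i1 : 'I_n).
Hypothesis ne : i0 != i1.

Definition sB (i : 'I_n) : set 'rV[R]_n :=
  [set v | 0 <= v ord0 i] `&` \bigcap_(k in [set k | k != i]) [set v | v ord0 k = 0].
Definition sA : set 'rV[R]_n :=
  [set v | 0 <= v ord0 i0] `&` ([set v | v ord0 i0 - v ord0 i1 = 0] `&`
   \bigcap_(k in [set k | k != i0 /\ k != i1]) [set v | v ord0 k = 0]).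
Definition sZ : set 'rV[R]_n := \bigcap_(k in setT) [set v | v ord0 k = 0].

Lemma sZE v : sZ v -> v = 0.
Proof. move=> h; apply/rowP => k; rewrite mxE; exact: h. Qed.

Lemma convex_comb (a b : 'rV[R]_n) t k :
  (t *: a + (1 - t) *: b) ord0 k = t * a ord0 k + (1 - t) * b ord0 k.
Proof. by rewrite !mxE. Qed.

Lemma ge0_comb (x y t : R) : 0 <= x -> 0 <= y -> 0 <= t <= 1 -> 0 <= t * x + (1 - t) * y.
Proof. move=> hx hy /andP[ht1 ht2]; apply: addr_ge0; apply: mulr_ge0 => //; by rewrite subr_ge0. Qed.

Lemma K0_sB i : K0 (sB i).
Proof.
split; [|split].
  apply: closedI; first exact: (closed_coord _ _ (@closed_ge R 0)).
  apply: closed_bigI => k _; exact: (closed_coord _ _ (@closed_eq R 0)).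
- move=> a b t [ha0 ha] [hb0 hb] ht; split.
    by rewrite /= convex_comb; exact: ge0_comb.
  move=> k hk /=; rewrite convex_comb (ha k hk) (hb k hk); by rewrite !mulr0 addr0.
- split; first by rewrite /= mxE.
  by move=> k _ /=; rewrite mxE.
Qed.

Lemma K0_sA : K0 sA.
Proof.
split; [|split].
- apply: closedI; first exact: (closed_coord _ _ (@closed_ge R 0)).
  apply: closedI; first exact: closed_coord2.
  apply: closed_bigI => k _; exact: (closed_coord _ _ (@closed_eq R 0)).
- move=> a b t [ha0 [hae ha]] [hb0 [hbe hb]] ht; split; [|split].
  + by rewrite /= convex_comb; exact: ge0_comb.
  + rewrite /= !convex_comb.
    move/eqP: hae; rewrite subr_eq0 => /eqP ->.
    move/eqP: hbe; rewrite subr_eq0 => /eqP ->.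
    by rewrite subrr.
  + move=> k hk /=; rewrite convex_comb (ha k hk) (hb k hk); by rewrite !mulr0 addr0.
- split; first by rewrite /= mxE.
  split; first by rewrite /= !mxE subrr.
  by move=> k _ /=; rewrite mxE.
Qed.

Lemma K0_sZ : K0 sZ.
Proof.
split; [|split].
- apply: closed_bigI => k _; exact: (closed_coord _ _ (@closed_eq R 0)).
- move=> a b t ha hb ht k _ /=; rewrite convex_comb (ha k I) (hb k I); by rewrite !mulr0 addr0.
- by move=> k _ /=; rewrite mxE.
Qed.

Lemma sAB_Z v : sA v -> sB i0 v -> sZ v.
Proof.
move=> [_ [he ha]] [_ hb] k _ /=.
have h1 : v ord0 i1 = 0 by apply: hb; rewrite /= eq_sym.
case: (eqVneq k i0) => [->|k0].
  by move/eqP: he; rewrite subr_eq0 h1 => /eqP.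
case: (eqVneq k i1) => [->//|k1].
by apply: ha.
Qed.

Lemma sAC_Z v : sA v -> sB i1 v -> sZ v.
Proof.
move=> [_ [he ha]] [_ hb] k _ /=.
have h1 : v ord0 i0 = 0 by apply: hb.
case: (eqVneq k i0) => [->//|k0].
case: (eqVneq k i1) => [->|k1].
  by move/eqP: he; rewrite subr_eq0 h1 => /eqP <-.
by apply: ha.
Qed.

Lemma sA_hull K : K0 K -> sB i0 `<=` K -> sB i1 `<=` K -> sA `<=` K.
Proof.
move=> [_ [cK _]] hB hC v [h0 [he ha]].
move/eqP: he; rewrite subr_eq0 => /eqP he.
pose t := v ord0 i0.
pose b : 'rV[R]_n := \row_k (if k == i0 then 2 * t else 0).
pose c : 'rV[R]_n := \row_k (if k == i1 then 2 * t else 0).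
have -> : v = 2^-1 *: b + (1 - 2^-1) *: c.
  apply/rowP => k; rewrite convex_comb !mxE.
  have h2 : (1 - 2^-1 : R) = 2^-1 by field.
  rewrite h2.
  case: (eqVneq k i0) => [->|k0].
    by rewrite (negbTE ne) /t mulr0 addr0 mulrA mulVf ?mul1r // pnatr_eq0.
  case: (eqVneq k i1) => [->|k1].
    by rewrite mulr0 add0r /t mulrA mulVf ?mul1r // pnatr_eq0.
  by rewrite !mulr0 addr0; apply: ha.
apply: cK; [apply: hB|apply: hC|].
- split; first by rewrite /= mxE eqxx mulr_ge0.
  by move=> k hk /=; rewrite mxE (negbTE hk).
- split; first by rewrite /= mxE eqxx mulr_ge0.
  by move=> k hk /=; rewrite mxE (negbTE hk).
- by rewrite invr_ge0 ler0n /= invf_le1 ?ler1n.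
Qed.

End H.

Theorem mainTheorem20 (R : realType) (n : nat) (hn : (2 <= n)%N) :
  ~ exists Phi : (nat -> R) -> set 'rV[R]_n,
      homeo_Q_K0 Phi /\
      (forall x y, Qset x -> Qset y -> (Qle x y <-> Phi x `<=` Phi y)).
Proof.
move=> [Phi [[HK _ Hsurj _ _] Hord]].
pose i0 := @Ordinal n 0 (leq_trans (isT : (1 <= 2)%N) hn).
pose i1 := @Ordinal n 1 hn.
have ne : i0 != i1 by [].
have [a Qa Pa] := Hsurj _ (@K0_sA R n i0 i1).
have [b Qb Pb] := Hsurj _ (@K0_sB R n i0).
have [c Qc Pc] := Hsurj _ (@K0_sB R n i1).
have [z Qz Pz] := Hsurj _ (@K0_sZ R n).
pose m : nat -> R := fun _ => -1.
have Qm : Qset m by move=> i; rewrite /m lexx /= -subr_ge0 opprK; lra.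
have mZ : Phi m `<=` (@sZ R n).
  by rewrite -Pz; apply/(Hord _ _ Qm Qz) => i; have /andP[] := Qz i.
have toZ (x : nat -> R) : Qset x -> Phi x `<=` @sZ R n -> Qle x m.
  move=> Qx hx; apply/(Hord _ _ Qx Qm) => v /hx /sZE ->.
  by have [_ [_]] := HK m Qm.
have Qmin (x y : nat -> R) : Qset x -> Qset y -> Qset (fun i => Num.min (x i) (y i)).
  move=> Qx Qy i; have /andP[x1 x2] := Qx i; have /andP[y1 y2] := Qy i.
  by rewrite le_min ge_min x1 y1 x2.
have Qmax (x y : nat -> R) : Qset x -> Qset y -> Qset (fun i => Num.max (x i) (y i)).
  move=> Qx Qy i; have /andP[x1 x2] := Qx i; have /andP[y1 y2] := Qy i.
  by rewrite le_max ge_max x1 x2 y2.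
have hab : Qle (fun i => Num.min (a i) (b i)) m.
  apply: toZ; first exact: Qmin.
  move=> v hv; apply: (@sAB_Z R n i0 i1 ne).
    by rewrite -Pa; move: v hv; apply/(Hord _ _ (Qmin _ _ Qa Qb) Qa) => i; rewrite ge_min lexx.
  by rewrite -Pb; move: v hv; apply/(Hord _ _ (Qmin _ _ Qa Qb) Qb) => i; rewrite ge_min lexx orbT.
have hac : Qle (fun i => Num.min (a i) (c i)) m.
  apply: toZ; first exact: Qmin.
  move=> v hv; apply: (@sAC_Z R n i0 i1 ne).
    by rewrite -Pa; move: v hv; apply/(Hord _ _ (Qmin _ _ Qa Qc) Qa) => i; rewrite ge_min lexx.
  by rewrite -Pc; move: v hv; apply/(Hord _ _ (Qmin _ _ Qa Qc) Qc) => i; rewrite ge_min lexx orbT.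
have hu : Qle a (fun i => Num.max (b i) (c i)).
  apply/(Hord _ _ Qa (Qmax _ _ Qb Qc)); rewrite Pa; apply: (@sA_hull R n i0 i1 ne) => //.
  - exact: HK (Qmax _ _ Qb Qc).
  - by rewrite -Pb; apply/(Hord _ _ Qb (Qmax _ _ Qb Qc)) => i; rewrite le_max lexx.
  - by rewrite -Pc; apply/(Hord _ _ Qc (Qmax _ _ Qb Qc)) => i; rewrite le_max lexx orbT.
have ham : Qle a m.
  move=> i; have := hab i; have := hac i; have := hu i; rewrite /m ge_min ge_min le_max.
  case/orP => [aib|aic]; case/orP => [//|ci]; case/orP => [//|bi].
  - exact: le_trans aib bi.
  - exact: le_trans aic ci.
have : @sA R n i0 i1 `<=` (@sZ R n).
  by rewrite -Pa; apply: subset_trans mZ; apply/(Hord _ _ Qa Qm).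
pose w : 'rV[R]_n := \row_k (if (k == i0) || (k == i1) then 1 else 0).
move=> /(_ w) h.
have : sZ R n w.
  apply: h; split; first by rewrite /= mxE eqxx.
  split; first by rewrite /= !mxE eqxx orbT subrr.
  by move=> k [k0 k1] /=; rewrite mxE (negbTE k0) (negbTE k1).
by move=> /(_ i0 I) /=; rewrite mxE eqxx /= => /eqP; rewrite oner_eq0.
Qed.
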